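(* Let $\lambda\in\mathbb R\cup i\mathbb R$ be a constant, $\vec H\in\Gamma(E)$, and let $\varphi\in\Gamma(\Sigma)$ solve $D\varphi=\vec H\cdot\varphi-2\lambda\varphi$. Fix $p\in M$, an orthonormal basis $(e_1,e_2)$ of $T_pM$, and a unit vector $e_3\in E_p$ with $\vec H(p)=|\vec H(p)|e_3$. With $F_{++},F_{--},F_{+-},F_{-+}$ defined by $F_{++}(X,Y)=\Re e\langle\nabla_X\varphi^{++},Y\cdot e_3\cdot\varphi^{--}\rangle$, $F_{--}(X,Y)=\Re e\langle\nabla_X\varphi^{--},Y\cdot e_3\cdot\varphi^{++}\rangle$, $F_{+-}(X,Y)=\Re e\langle\nabla_X\varphi^{+-},Y\cdot e_3\cdot\varphi^{-+}\rangle$, $F_{-+}(X,Y)=\Re e\langle\nabla_X\varphi^{-+},Y\cdot e_3\cdot\varphi^{+-}\rangle$, one has at $p$: $F_{++}(e_1,e_2)=F_{++}(e_2,e_1)-2\Re e\langle\lambda\varphi^{-+},e_1\cdot e_2\cdot e_3\cdot\varphi^{--}\rangle$, $F_{--}(e_1,e_2)=F_{--}(e_2,e_1)-2\Re e\langle\lambda\varphi^{+-},e_1\cdot e_2\cdot e_3\cdot\varphi^{++}\rangle$, $F_{+-}(e_1,e_2)=F_{+-}(e_2,e_1)-2\Re e\langle\lambda\varphi^{--},e_1\cdot e_2\cdot e_3\cdot\varphi^{-+}\rangle$, $F_{-+}(e_1,e_2)=F_{-+}(e_2,e_1)-2\Re e\langle\lambda\varphi^{++},e_1\cdot e_2\cdot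 e_3\cdot\varphi^{+-}\rangle$.
   Context: Setup. $(M^2,g)$ is an oriented Riemannian surface with a fixed spin structure, and $E\to M$ is an oriented real vector bundle of rank $2$ with a metric $\langle\cdot,\cdot\rangle$, a compatible connection $\nabla^E$ and a fixed spin structure. $\Sigma M=\Sigma^+M\oplus\Sigma^-M$ and $\Sigma E=\Sigma^+E\oplus\Sigma^-E$ denote the complex spinor bundles of $M$ and $E$ with their half-spinor splittings, spinorial connections $\nabla^{\Sigma M},\nabla^{\Sigma E}$ and Clifford multiplications $\cdot_M,\cdot_E$. The twisted spinor bundle is $\Sigma=\Sigma M\otimes\Sigma E$, with connection $\nabla=\nabla^{\Sigma M}\otimes\mathrm{Id}+\mathrm{Id}\otimes\nabla^{\Sigma E}$ and Clifford multiplication by vectors of $TM\oplus E$ given on $\varphi=\alpha\otimes\sigma$ by $X\cdot\varphi=(X\cdot_M\alpha)\otimes\overline{\sigma}$ if $X\in TM$ and $X\cdot\varphi=\alpha\otimes(X\cdot_E\sigma)$ if $X\in E$, where $\overline\sigma=\sigma^+-\sigma^-$; this extends to an action of the Clifford bundle $Cl(TM\oplus E)$. $\Sigma$ carries its natural Hermitian product $\langle\cdot,\cdot\rangle$ ($\mathbb C$-linear in the first slot, antilinear in the second), compatible with $\nabla$, for which Clifford multiplication by vectors is skew-Hermitian; $\Re e\langle\cdot,\cdot\rangle$ is the associated real scalar product and $|\cdot|$ the norm. The Dirac operator is $D\varphi=e_1\cdot\nabla_{e_1}\varphi+e_2\cdot\nabla_{e_2}\varphi$, $(e_1,e_2)$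 a local orthonormal frame of $TM$. Write $\Sigma^{\epsilon\delta}=\Sigma^\epsilon M\otimes\Sigma^\delta E$ ($\epsilon,\delta\in\{+,-\}$), decompose $\varphi=\varphi^{++}+\varphi^{--}+\varphi^{+-}+\varphi^{-+}$ accordingly, and set $\varphi^+=\varphi^{++}+\varphi^{--}$, $\varphi^-=\varphi^{+-}+\varphi^{-+}$. For $\lambda\in\mathbb C$, $\lambda X\cdot\varphi$ means complex scalar multiplication of $X\cdot\varphi$. *)

(* Defs.v *)
(* pointwise (fiber-at-p) model of the twisted spinor bundle
   Sigma_p = Sigma_p M (x) Sigma_p E  ~=  C^2 (x) C^2  ~=  2x2 complex matrices. *)
From HB Require Import structures.
From mathcomp Require Import all_boot all_order all_algebra.
Set Implicit Arguments. Unset Strict Implicit. Unset Printing Implicit Defensive.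
Import Order.TTheory GRing.Theory Num.Theory.
Local Open Scope ring_scope.

Section Spin.
Variable C : numClosedFieldType.

(* A spinor at p: A i j is the coefficient of  a_i (x) s_j  where
   (a_0,a_1) is a unitary basis of Sigma^+_pM (+) Sigma^-_pM and
   (s_0,s_1) a unitary basis of Sigma^+E_p (+) Sigma^-E_p.
   Index 0 = "+", index 1 = "-".  alpha (x) sigma  <->  alpha sigma^T. *)
Definition spinor := 'M[C]_2.

Definition ip : 'I_2 := 0.
Definition im : 'I_2 := 1.
Definition opp2 (i : 'I_2) : 'I_2 := if i == ip then im else ip.

(* Complex Clifford action of the real vector a f1 + b f2 (f1,f2 a fixed
   oriented orthonormal frame) on C^2 = Sigma^+ (+) Sigma^-:
   f1 = [[0,-1],[1,0]], f2 = [[0,i],[i,0]]. *)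
Definition gam (X : C * C) : 'M[C]_2 :=
  \matrix_(i < 2, j < 2)
    if i == j then 0 else if i == ip then - X.1 + X.2 * 'i else X.1 + X.2 * 'i.

(* sigma |-> bar sigma = sigma^+ - sigma^- *)
Definition barM : 'M[C]_2 :=
  \matrix_(i < 2, j < 2) if i == j then (if i == ip then 1 else -1) else 0.

(* X . (alpha (x) sigma) = (X .M alpha) (x) bar sigma   for X in T_pM *)
Definition clifTM (X : C * C) (A : spinor) : spinor := gam X *m A *m barM.
(* X . (alpha (x) sigma) = alpha (x) (X .E sigma)        for X in E_p *)
Definition clifE (X : C * C) (A : spinor) : spinor := A *m (gam X)^T.

Definition herm (A B : spinor) : C := \sum_(i < 2) \sum_(j < 2) A i j * (B i j)^*.

Definition proj (e d : 'I_2) (A : spinor) : spinor :=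
  \matrix_(k < 2, l < 2) if (k == e) && (l == d) then A e d else 0.

(* F_{eps delta}(X,Y) = Re < nabla_X phi^{eps delta}, Y . e3 . phi^{-eps,-delta} >,
   where dX = nabla_X phi (p) and nabla_X (phi^{eps delta}) = (nabla_X phi)^{eps delta}. *)
Definition Fcomp (e d : 'I_2) (dX : spinor) (Y e3 : C * C) (phi : spinor) : C :=
  'Re (herm (proj e d dX) (clifTM Y (clifE e3 (proj (opp2 e) (opp2 d) phi)))).

Definition corr (lam : C) (e d e' d' : 'I_2) (e1 e2 e3 : C * C) (phi : spinor) : C :=
  2 * 'Re (herm (lam *: proj e d phi) (clifTM e1 (clifTM e2 (clifE e3 (proj e' d' phi))))).

Definition realvec (X : C * C) : Prop := X.1 \is Num.real /\ X.2 \is Num.real.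
Definition dot (X Y : C * C) : C := X.1 * Y.1 + X.2 * Y.2.
Definition vnorm (X : C * C) : C := sqrtC (dot X X).

End Spin.

(* Main.v *)
Require Import Defs.
From HB Require Import structures.
From mathcomp Require Import all_boot all_order all_algebra.
From mathcomp Require Import ring.
Import Order.TTheory GRing.Theory Num.Theory.
Local Open Scope ring_scope.

Lemma vim : nat_of_ord im = 1%N. Proof. by []. Qed.
Lemma L1 : lift ord0 (ord0 : 'I_1) = im. Proof. apply: val_inj; exact: (esym vim). Qed.
Lemma L0 : (ord0 : 'I_2) = ip. Proof. by apply/val_inj. Qed.
Lemma ipim : (ip == im) = false. Proof. apply/negbTE; apply/eqP => /(congr1 (@nat_of_ord 2)); rewrite vim. done. Qed.
Lemma imip : (im == ip) = false. Proof. by rewrite eq_sym ipim. Qed.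
Lemma opp2p : opp2 ip = im. Proof. by rewrite /opp2 eqxx. Qed.
Lemma opp2m : opp2 im = ip. Proof. by rewrite /opp2 imip. Qed.
Section S.
Variable C : numClosedFieldType.
Implicit Types (A B : 'M[C]_2) (X : C * C).
Lemma mul2 A B i j : (A *m B) i j = A i ip * B ip j + A i im * B im j.
Proof. by rewrite mxE !big_ord_recl big_ord0 addr0 L0 L1. Qed.
Lemma trE A i j : A^T i j = A j i. Proof. by rewrite mxE. Qed.
Lemma herm2 A B : herm A B = A ip ip * (B ip ip)^* + A ip im * (B ip im)^* + (A im ip * (B im ip)^* + A im im * (B im im)^*).
Proof. by rewrite /herm !big_ord_recl !big_ord0 !addr0 L0 L1. Qed.
Lemma gpp X : gam X ip ip = 0. Proof. by rewrite mxE eqxx. Qed.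
Lemma gmm X : gam X im im = 0. Proof. by rewrite mxE eqxx. Qed.
Lemma gpm X : gam X ip im = - X.1 + X.2 * 'i. Proof. by rewrite mxE ipim eqxx. Qed.
Lemma gmp X : gam X im ip = X.1 + X.2 * 'i. Proof. by rewrite mxE imip. Qed.
Lemma bpp : barM C ip ip = 1. Proof. by rewrite mxE eqxx. Qed.
Lemma bmm : barM C im im = -1. Proof. by rewrite mxE eqxx imip. Qed.
Lemma bpm : barM C ip im = 0. Proof. by rewrite mxE ipim. Qed.
Lemma bmp : barM C im ip = 0. Proof. by rewrite mxE imip. Qed.
Lemma projE e d A i j : proj e d A i j = if (i == e) && (j == d) then A e d else 0.
Proof. by rewrite mxE. Qed.
Lemma scE (a : C) A i j : (a *: A) i j = a * A i j. Proof. by rewrite mxE. Qed.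
Lemma adE A B i j : (A + B) i j = A i j + B i j. Proof. by rewrite mxE. Qed.
Lemma sbE A B i j : (A - B) i j = A i j - B i j. Proof. by rewrite !mxE. Qed.
Lemma key (a b a' b' u v t Q P lam h n s : C) :
  a' = - a^* -> b' = - b^* ->
  a * a^* = 1 -> b * b^* = 1 -> a * b^* + a^* * b = 0 -> n^* = n -> s^* = s -> s * s = 1 -> h = n * t ->
  a * u * s + b * v * s = Q * h - 2 * lam * P ->
  'Re (u * (b' * (Q * t) * s)^*) = 'Re (v * (a' * (Q * t) * s)^*)
    - 2 * 'Re (lam * P * (a * (b' * (Q * t) * s) * s)^*).
Proof.
move=> -> -> haa hbb hab hn hs hss hh E.
have hab' : a * b^* = - (a^* * b) by apply/eqP; rewrite -subr_eq0 opprK hab.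
have K : a * v - b * u = a * b^* * s * (Q * h - 2 * lam * P).
  rewrite -E.
  have -> : a * b^* * s * (a * u * s + b * v * s) = (s * s) * (a * (a * b^*) * u + (b * b^*) * a * v) by ring.
  rewrite hss hbb hab'.
  have -> : a * - (a^* * b) * u = - ((a * a^*) * b * u) by ring.
  rewrite haa; ring.
set X := Q * t * s.
set A := u * (- b^* * (Q * t) * s)^*.
set B := v * (- a^* * (Q * t) * s)^*.
set Cc := lam * P * (a * (- b^* * (Q * t) * s) * s)^*.
have zE : A - B + 2 * Cc = a * b^* * s * n * Q * t * X^*.
  have -> : A - B + 2 * Cc = (a * v - b * u) * X^* - 2 * lam * P * a^* * b * X^* * s.
    rewrite /A /B /Cc /X !(rmorphM, rmorphN) /= !conjCK hs. ring.
  rewrite K hh.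
  have -> : a * b^* * s * (Q * (n * t) - 2 * lam * P) * X^* - 2 * lam * P * a^* * b * X^* * s
     = a * b^* * s * n * Q * t * X^* - 2 * lam * P * s * X^* * (a * b^* + a^* * b) by ring.
  by rewrite hab mulr0 subr0.
have Z : A^* - B^* + 2 * Cc^* = - (A - B + 2 * Cc).
  have -> : A^* - B^* + 2 * Cc^* = (A - B + 2 * Cc)^*.
    by rewrite rmorphD rmorphB rmorphM /= (conjC_nat _ 2).
  rewrite zE /X !(rmorphM, rmorphN) /= !conjCK hn hs.
  have -> : a^* * b = - (a * b^*) by rewrite hab' opprK.
  ring.
rewrite !ReE.
have -> : A^* = - (A - B + 2 * Cc) + B^* - 2 * Cc^* by rewrite -Z; ring.
ring.
Qed.

Lemma pc X : realvec X -> (X.1 + X.2 * 'i)^* = X.1 - X.2 * 'i.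
Proof. case=> rx ry; rewrite rmorphD rmorphM /= conjCi !conj_Creal //; ring. Qed.
Lemma mc X : realvec X -> (- X.1 + X.2 * 'i)^* = - X.1 - X.2 * 'i.
Proof. case=> rx ry; rewrite rmorphD rmorphN rmorphM /= conjCi !conj_Creal //; ring. Qed.
Lemma pn X : realvec X -> dot X X = 1 -> (X.1 + X.2 * 'i) * (X.1 + X.2 * 'i)^* = 1.
Proof.
move=> rX hd; rewrite pc // -hd /dot.
have -> : (X.1 + X.2 * 'i) * (X.1 - X.2 * 'i) = X.1 * X.1 + X.2 * X.2 - X.2 * X.2 * ('i ^+ 2 + 1) by ring.
by rewrite sqrCi addNr mulr0 subr0.
Qed.
Lemma mn X : realvec X -> dot X X = 1 -> (- X.1 + X.2 * 'i) * (- X.1 + X.2 * 'i)^* = 1.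
Proof.
move=> rX hd; rewrite mc // -hd /dot.
have -> : (- X.1 + X.2 * 'i) * (- X.1 - X.2 * 'i) = X.1 * X.1 + X.2 * X.2 - X.2 * X.2 * ('i ^+ 2 + 1) by ring.
by rewrite sqrCi addNr mulr0 subr0.
Qed.
Lemma pab X Y : realvec X -> realvec Y -> dot X Y = 0 ->
  (X.1 + X.2 * 'i) * (Y.1 + Y.2 * 'i)^* + (X.1 + X.2 * 'i)^* * (Y.1 + Y.2 * 'i) = 0.
Proof.
move=> rX rY hd; rewrite !pc //.
have -> : (X.1 + X.2 * 'i) * (Y.1 - Y.2 * 'i) + (X.1 - X.2 * 'i) * (Y.1 + Y.2 * 'i)
  = 2 * dot X Y - 2 * X.2 * Y.2 * ('i ^+ 2 + 1) by rewrite /dot; ring.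
by rewrite hd sqrCi addNr !mulr0 subr0.
Qed.
Lemma mab X Y : realvec X -> realvec Y -> dot X Y = 0 ->
  (- X.1 + X.2 * 'i) * (- Y.1 + Y.2 * 'i)^* + (- X.1 + X.2 * 'i)^* * (- Y.1 + Y.2 * 'i) = 0.
Proof.
move=> rX rY hd; rewrite !mc //.
have -> : (- X.1 + X.2 * 'i) * (- Y.1 - Y.2 * 'i) + (- X.1 - X.2 * 'i) * (- Y.1 + Y.2 * 'i)
  = 2 * dot X Y - 2 * X.2 * Y.2 * ('i ^+ 2 + 1) by rewrite /dot; ring.
by rewrite hd sqrCi addNr !mulr0 subr0.
Qed.
Lemma mp X : realvec X -> - X.1 + X.2 * 'i = - (X.1 + X.2 * 'i)^*.
Proof. by move=> rX; rewrite pc //; ring. Qed.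
Lemma pm X : realvec X -> X.1 + X.2 * 'i = - (- X.1 + X.2 * 'i)^*.
Proof. by move=> rX; rewrite mc //; ring. Qed.
Lemma nreal X : realvec X -> (vnorm X)^* = vnorm X.
Proof.
case=> rx ry; apply: conj_Creal; apply: ger0_real; rewrite sqrtC_ge0 /dot.
by apply: addr_ge0; rewrite -expr2 real_exprn_even_ge0.
Qed.
End S.
Arguments key {C}.
Arguments pc {C X}.
Arguments mc {C X}.
Arguments pn {C X}.
Arguments mn {C X}.
Arguments pab {C X Y}.
Arguments mab {C X Y}.
Arguments mp {C X}.
Arguments pm {C X}.
Arguments nreal {C X}.

Ltac simp := rewrite /Fcomp /corr /clifTM /clifE ?opp2p ?opp2m !herm2 !scE !mul2 !trE !projE
  !(gpp,gmm,gpm,gmp,bpp,bmm,bpm,bmp,eqxx,ipim,imip,andbT,andbF,andTb,andFb)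
  !(mul0r,mulr0,add0r,addr0,mulr1,mul1r, conjC0).
Ltac simpE E := rewrite /clifTM /clifE adE sbE scE !mul2 !trE
  !(gpp,gmm,gpm,gmp,bpp,bmm,bpm,bmp) !(mul0r,mulr0,add0r,addr0,mulr1,mul1r, conjC0) in E.

Theorem mainTheorem6 (C : numClosedFieldType) (lam : C)
    (H e1 e2 e3 : C * C) (phi d1 d2 : spinor C) :
  (lam \is Num.real \/ 'Re lam = 0) ->
  realvec H -> realvec e1 -> realvec e2 -> realvec e3 ->
  dot e1 e1 = 1 -> dot e2 e2 = 1 -> dot e1 e2 = 0 ->
  dot e3 e3 = 1 ->
  H = (vnorm H * e3.1, vnorm H * e3.2) ->
  (* D phi = H . phi - 2 lam phi at p, with d1 = nabla_{e1} phi (p), d2 = nabla_{e2} phi (p) *)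
  clifTM e1 d1 + clifTM e2 d2 = clifE H phi - (2 * lam) *: phi ->
  [/\ Fcomp ip ip d1 e2 e3 phi = Fcomp ip ip d2 e1 e3 phi - corr lam im ip im im e1 e2 e3 phi,
      Fcomp im im d1 e2 e3 phi = Fcomp im im d2 e1 e3 phi - corr lam ip im ip ip e1 e2 e3 phi,
      Fcomp ip im d1 e2 e3 phi = Fcomp ip im d2 e1 e3 phi - corr lam im im im ip e1 e2 e3 phi
    & Fcomp im ip d1 e2 e3 phi = Fcomp im ip d2 e1 e3 phi - corr lam ip ip ip im e1 e2 e3 phi].
Proof.
move=> _ rH r1 r2 r3 h11 h22 h12 h33 hH /matrixP Eq.
have hn := nreal rH.
have hH1 : H.1 = vnorm H * e3.1 by rewrite {1}hH.
have hH2 : H.2 = vnorm H * e3.2 by rewrite {1}hH.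
have hp : H.1 + H.2 * 'i = vnorm H * (e3.1 + e3.2 * 'i) by rewrite hH1 hH2; ring.
have hm : - H.1 + H.2 * 'i = vnorm H * (- e3.1 + e3.2 * 'i) by rewrite hH1 hH2; ring.
have hss : (-1 : C) * -1 = 1 by rewrite mulrNN mulr1.
have hsc : (-1 : C)^* = -1 by rewrite conjCN1.
have hmm := mab r1 r2 h12.
have hpp := pab r1 r2 h12.
have p1n := pn r1 h11. have p2n := pn r2 h22.
have m1n := mn r1 h11. have m2n := mn r2 h22.
split.
- simp. have E := Eq im ip. simpE E.
  have K := key _ _ _ _ (d1 ip ip) (d2 ip ip) _ (phi im im) (phi im ip) lam _ _ 1 (mp r1) (mp r2) p1n p2n hpp hn (conjC1 C) (mulr1 1) hm.
  rewrite !mulr1 in K. exact: (K E).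
- simp. have E := Eq ip im. simpE E.
  exact: (key _ _ _ _ _ _ _ _ _ _ _ _ _ (pm r1) (pm r2) m1n m2n hmm hn hsc hss hp E).
- simp. have E := Eq im im. simpE E.
  exact: (key _ _ _ _ _ _ _ _ _ _ _ _ _ (mp r1) (mp r2) p1n p2n hpp hn hsc hss hp E).
- simp. have E := Eq ip ip. simpE E.
  have K := key _ _ _ _ (d1 im ip) (d2 im ip) _ (phi ip im) (phi ip ip) lam _ _ 1 (pm r1) (pm r2) m1n m2n hmm hn (conjC1 C) (mulr1 1) hm.
  rewrite !mulr1 in K. exact: (K E).
Qed.
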